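(* Fix a client $k$ and $\lambda\in[0,1)$. Let $\mathcal H\subseteq\mathbb R^n$ be a closed convex parameter set of diameter at most $R$. Let $\widehat{\mathcal D}_k$ be an empirical distribution of $m_k$ samples and $\widehat{\mathcal C}$ an empirical distribution of $m_C$ samples. Assume that for every sample $z$ the per-sample loss $h\mapsto \ell(h,z)$ is $\mu$-strongly convex on $\mathcal H$ and has (sub)gradients of norm at most $G$ on $\mathcal H$. Define \[ g(h)=\lambda\,\mathcal L_{\widehat{\mathcal D}_k}(h)+(1-\lambda)\,\mathcal L_{\widehat{\mathcal C}}(h),\qquad h_{\widehat\lambda}=\arg\min_{h\in\mathcal H}g(h),\qquad h_c=\arg\min_{h\in\mathcal H}\mathcal L_{\widehat{\mathcal C}}(h), \] and $\epsilon_\lambda=\sqrt{\frac{\lambda^2}{m_k}+\frac{(1-\lambda)^2}{m_C}}$. Let \[ r\ge G^2\left(\frac{4G}{\mu}+2R\right)^2,\qquad \eta=\frac{1}{G\sqrt{r m_k}}\min\left(\frac{2G\lambda}{\mu(1-\lambda)},R\right). \] Run $T=r\,m_k$ steps of projected stochastic gradient descent on $g$ with step size $\eta$, starting from $h_c$, where at each step one independently selects $\widehat{\mathcal D}_k$ with probability $\lambda$ and $\widehat{\mathcal C}$ with probability $1-\lambda$, draws a uniformly random sample from the selected empirical distribution, and uses the gradient of the loss at that sample; let $h_A$ be the average of the iterates. Then \[ \mathbb E\big[g(h_A)\big]\le g(h_{\widehat\lambda})+\epsilon_\lambda, \] where the expectation is over the randomness of the SGD sampling.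
   Context: This is the analysis of the data-interpolation scheme for personalization: a client with local empirical data $\widehat{\mathcal D}_k$ trains on a $\lambda$-mixture of its local data and global/cluster data $\widehat{\mathcal C}$, starting from the central model $h_c$. For a (empirical) distribution $\mathcal D$, $\mathcal L_{\mathcal D}(h)=\mathbb E_{z\sim\mathcal D}[\ell(h,z)]$, where hypotheses are identified with their parameter vectors $h\in\mathcal H$. *)

(* Defs.v *)
From Stdlib Require Import Reals Lra List.
Open Scope R_scope.

(* Vectors of R^n are represented as functions nat -> R vanishing at indices >= n. *)
Definition vec := nat -> R.
Definition in_Rn (n : nat) (x : vec) : Prop := forall i, (n <= i)%nat -> x i = 0.

Fixpoint fsum (k : nat) (f : nat -> R) : R :=
  match k with O => 0 | S k' => fsum k' f + f k' end.

Definition vadd (x y : vec) : vec := fun i => x i + y i.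
Definition vsub (x y : vec) : vec := fun i => x i - y i.
Definition vscale (a : R) (x : vec) : vec := fun i => a * x i.
Definition dot (n : nat) (x y : vec) : R := fsum n (fun i => x i * y i).
Definition vnorm (n : nat) (x : vec) : R := sqrt (dot n x x).

Definition subset_Rn (n : nat) (H : vec -> Prop) : Prop := forall x, H x -> in_Rn n x.
Definition convex_in (H : vec -> Prop) : Prop :=
  forall x y t, H x -> H y -> 0 <= t <= 1 -> H (vadd (vscale t x) (vscale (1 - t) y)).
Definition closed_in_Rn (n : nat) (H : vec -> Prop) : Prop :=
  forall x, in_Rn n x ->
    (forall eps, 0 < eps -> exists y, H y /\ vnorm n (vsub x y) < eps) -> H x.
Definition diam_le (n : nat) (H : vec -> Prop) (D : R) : Prop :=
  forall x y, H x -> H y -> vnorm n (vsub x y) <= D.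

Definition is_projection (n : nat) (H : vec -> Prop) (P : vec -> vec) : Prop :=
  forall x, in_Rn n x -> H (P x) /\ forall y, H y -> vnorm n (vsub x (P x)) <= vnorm n (vsub x y).

Definition strongly_convex_on (n : nat) (H : vec -> Prop) (mu : R) (f : vec -> R) : Prop :=
  forall x y t, H x -> H y -> 0 <= t <= 1 ->
    f (vadd (vscale t x) (vscale (1 - t) y))
      <= t * f x + (1 - t) * f y - mu / 2 * t * (1 - t) * (vnorm n (vsub x y))^2.

Definition is_subgradient_on (n : nat) (H : vec -> Prop) (f : vec -> R) (x s : vec) : Prop :=
  forall y, H y -> f y >= f x + dot n s (vsub y x).

Definition emp_loss {Z : Type} (loss : vec -> Z -> R) (m : nat) (z : nat -> Z) (h : vec) : R :=
  / INR m * fsum m (fun i => loss h (z i)).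

Definition g_obj {Z : Type} (loss : vec -> Z -> R) (lam : R)
  (mk : nat) (zk : nat -> Z) (mC : nat) (zC : nat -> Z) (h : vec) : R :=
  lam * emp_loss loss mk zk h + (1 - lam) * emp_loss loss mC zC h.

Definition is_argmin_on (H : vec -> Prop) (f : vec -> R) (h : vec) : Prop :=
  H h /\ forall h', H h' -> f h <= f h'.

(* A sampling choice: (true, i) = sample i of the local data D_k,
   (false, j) = sample j of the global/cluster data C. *)
Definition choice := (bool * nat)%type.

Definition sample_of {Z : Type} (zk zC : nat -> Z) (c : choice) : Z :=
  if fst c then zk (snd c) else zC (snd c).

(* Trajectory of projected SGD: the iterates h_0, ..., h_{T-1} at which
   gradients are evaluated, when the choice sequence has length T. *)
Fixpoint sgd_traj {Z : Type} (P : vec -> vec) (gr : vec -> Z -> vec) (eta : R)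
  (zk zC : nat -> Z) (h : vec) (s : list choice) : list vec :=
  match s with
  | nil => nil
  | c :: s' => h :: sgd_traj P gr eta zk zC
                  (P (vsub h (vscale eta (gr h (sample_of zk zC c))))) s'
  end.

Fixpoint vsum_list (l : list vec) : vec :=
  match l with nil => fun _ => 0 | h :: l' => vadd h (vsum_list l') end.

Definition sgd_avg {Z : Type} (P : vec -> vec) (gr : vec -> Z -> vec) (eta : R)
  (zk zC : nat -> Z) (h0 : vec) (T : nat) (s : list choice) : vec :=
  vscale (/ INR T) (vsum_list (sgd_traj P gr eta zk zC h0 s)).

(* Expectation of F over T i.i.d. choices: each step picks D_k with prob. lam
   (then a uniform index < mk) or C with prob. 1 - lam (then a uniform index < mC). *)
Fixpoint expect (lam : R) (mk mC : nat) (T : nat) (F : list choice -> R) : R :=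
  match T with
  | O => F nil
  | S t =>
      lam * (/ INR mk * fsum mk (fun i => expect lam mk mC t (fun s => F ((true, i) :: s))))
      + (1 - lam) * (/ INR mC * fsum mC (fun j => expect lam mk mC t (fun s => F ((false, j) :: s))))
  end.

(* Main.v *)
Require Import Defs.
From Stdlib Require Import Reals Lra Lia List FunctionalExtensionality.
Open Scope R_scope.

Lemma fsum_ext k f g : (forall i, (i < k)%nat -> f i = g i) -> fsum k f = fsum k g.
Proof. induction k; simpl; intros Hf; auto. rewrite IHk, Hf; auto; intros; apply Hf; lia. Qed.

Lemma fsum_add k f g : fsum k f + fsum k g = fsum k (fun i => f i + g i).
Proof. induction k; simpl; [lra|]. rewrite <- IHk; ring. Qed.

Lemma fsum_scal k a f : a * fsum k f = fsum k (fun i => a * f i).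
Proof. induction k; simpl; [ring|]. rewrite <- IHk; ring. Qed.

Lemma fsum_const k c : fsum k (fun _ => c) = INR k * c.
Proof. induction k; simpl fsum; [simpl; ring|]. rewrite IHk, S_INR; ring. Qed.

Lemma fsum_le k f g : (forall i, (i<k)%nat -> f i <= g i) -> fsum k f <= fsum k g.
Proof. induction k; simpl; intros Hf; [lra|]. apply Rplus_le_compat; [apply IHk; intros; apply Hf; lia| apply Hf; lia]. Qed.

Lemma fsum_nonneg k f : (forall i, (i<k)%nat -> 0 <= f i) -> 0 <= fsum k f.
Proof. intros Hf. rewrite <- (Rmult_0_r (INR k)), <- fsum_const. apply fsum_le; auto. Qed.

Lemma avg_le m a b c t s K : (0 < m)%nat ->
  (forall i, (i < m)%nat -> a i <= t * b i + s * c i + K) ->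
  / INR m * fsum m a <= t * (/ INR m * fsum m b) + s * (/ INR m * fsum m c) + K.
Proof.
  intros Hm Hi. assert (HR : 0 < INR m) by (apply lt_0_INR; lia).
  apply fsum_le in Hi.
  assert (E : fsum m (fun i => t * b i + s * c i + K) = t * fsum m b + s * fsum m c + INR m * K).
  { rewrite <- fsum_const, !fsum_scal, !fsum_add. apply fsum_ext; intros; ring. }
  rewrite E in Hi.
  apply Rmult_le_reg_l with (INR m); auto.
  replace (INR m * (t * (/ INR m * fsum m b) + s * (/ INR m * fsum m c) + K))
    with (t * fsum m b + s * fsum m c + INR m * K) by (field; lra).
  replace (INR m * (/ INR m * fsum m a)) with (fsum m a) by (field; lra). lra.
Qed.

Definition nsq n x := dot n x x.

Ltac fsum_id := unfold nsq, dot, vsub, vadd, vscale;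
  rewrite ?fsum_scal, ?fsum_add; apply fsum_ext; intros; cbv beta; ring.

Lemma nsq_nonneg n x : 0 <= nsq n x.
Proof. apply fsum_nonneg; intros; apply Rle_0_sqr. Qed.

Lemma vnorm_sq n x : vnorm n x ^ 2 = nsq n x.
Proof. unfold vnorm; apply pow2_sqrt, nsq_nonneg. Qed.

Lemma vnorm_nonneg n x : 0 <= vnorm n x.
Proof. apply sqrt_pos. Qed.

Lemma cauchy_schwarz n x y : dot n x y <= vnorm n x * vnorm n y.
Proof.
  set (X := dot n x x). set (Y := dot n y y). set (Pd := dot n x y).
  assert (Hq : forall a, 0 <= a^2 * X + (-2*a) * Pd + Y).
  { intros a. replace (a^2 * X + (-2*a) * Pd + Y) with (nsq n (vsub (vscale a x) y))
      by (unfold X, Y, Pd; fsum_id). apply nsq_nonneg. }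
  assert (HX : 0 <= X) by apply nsq_nonneg. assert (HY : 0 <= Y) by apply nsq_nonneg.
  assert (Hd : Pd^2 <= X * Y).
  { destruct (Req_dec X 0) as [H0|H0].
    - destruct (Req_dec Pd 0) as [H1|H1]. { rewrite H1, H0; lra. }
      exfalso. specialize (Hq ((Y+1)/(2*Pd))). rewrite H0 in Hq.
      replace (((Y + 1) / (2 * Pd)) ^ 2 * 0 + -2 * ((Y + 1) / (2 * Pd)) * Pd + Y) with (-1) in Hq
        by (field; auto). lra.
    - specialize (Hq (Pd / X)).
      replace (((Pd / X) ^ 2 * X + -2 * (Pd / X) * Pd + Y)) with (Y - Pd^2 / X) in Hq by (field; auto).
      assert (0 < X) by lra.
      apply Rmult_le_reg_r with (/X). apply Rinv_0_lt_compat; auto.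
      replace (X * Y * / X) with Y by (field; lra). unfold Rdiv in Hq; lra. }
  unfold vnorm. fold X Y. rewrite <- sqrt_mult by auto.
  apply Rle_trans with (Rabs Pd). apply Rle_abs.
  rewrite <- sqrt_Rsqr_abs. apply sqrt_le_1_alt. unfold Rsqr. simpl in Hd. lra.
Qed.

Lemma sqrt_le_sq a b : 0 <= a -> 0 <= b -> sqrt a <= sqrt b -> a <= b.
Proof. apply sqrt_le_0. Qed.

Lemma proj_nonexp n H P : convex_in H -> is_projection n H P ->
  forall x y, in_Rn n x -> H y -> nsq n (vsub (P x) y) <= nsq n (vsub x y).
Proof.
  intros Hc Hp x y Hx Hy. destruct (Hp x Hx) as [HPx Hmin].
  set (p := P x) in *.
  set (A0 := nsq n (vsub x p)). set (B := dot n (vsub x p) (vsub y p)).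
  set (C := nsq n (vsub y p)).
  assert (HC : 0 <= C) by apply nsq_nonneg.
  assert (HB : B <= 0).
  { destruct (Rle_or_lt B 0) as [h|h]; auto. exfalso.
    set (t := B / (B + C)).
    assert (Ht : 0 < t <= 1).
    { unfold t; split. apply Rdiv_lt_0_compat; lra.
      apply Rmult_le_reg_r with (B + C); [lra|]. field_simplify; lra. }
    specialize (Hmin (vadd (vscale t y) (vscale (1 - t) p)) (Hc y p t Hy HPx ltac:(lra))).
    apply sqrt_le_sq in Hmin; try apply nsq_nonneg.
    replace (dot n (vsub x (vadd (vscale t y) (vscale (1 - t) p)))
                   (vsub x (vadd (vscale t y) (vscale (1 - t) p))))
      with (A0 + (-2*t) * B + t^2 * C) in Hmin by (unfold A0, B, C; fsum_id).
    fold (nsq n (vsub x p)) in Hmin. fold A0 in Hmin.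
    assert (h2 : 2 * B <= t * C).
    { apply Rmult_le_reg_l with t; [lra|]. nra. }
    assert (h3 : t * C <= B).
    { unfold t. apply Rmult_le_reg_r with (B + C); [lra|].
      replace (B / (B + C) * C * (B + C)) with (B * C) by (field; lra). nra. }
    lra. }
  replace (nsq n (vsub p y)) with C by (unfold C; fsum_id).
  replace (nsq n (vsub x y)) with (A0 + (-2) * B + C) by (unfold A0, B, C; fsum_id).
  pose proof (nsq_nonneg n (vsub x p)). fold A0 in H0. lra.
Qed.

Lemma quad_growth n H mu f hs x : convex_in H -> strongly_convex_on n H mu f -> H hs -> H x ->
  (forall y, H y -> f hs <= f y) -> 0 <= mu ->
  mu / 2 * nsq n (vsub x hs) <= f x - f hs.
Proof.
  intros Hc Hsc Hhs Hx Hmin Hmu.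
  set (d := nsq n (vsub x hs)).
  assert (Ht : forall t, 0 < t <= 1 -> mu/2 * (1 - t) * d <= f x - f hs).
  { intros t Ht. specialize (Hsc x hs t Hx Hhs ltac:(lra)).
    rewrite vnorm_sq in Hsc. fold d in Hsc.
    pose proof (Hmin _ (Hc x hs t Hx Hhs ltac:(lra))).
    apply Rmult_le_reg_l with t; [lra|]. nra. }
  assert (H0 : 0 <= f x - f hs) by (specialize (Ht 1 ltac:(lra)); lra).
  assert (Hd : 0 <= d) by apply nsq_nonneg.
  destruct (Rle_or_lt (mu/2*d) (f x - f hs)) as [h|h]; auto. exfalso.
  set (b := mu/2*d) in *. set (a := f x - f hs) in *.
  assert (Hb : 0 < b) by lra.
  specialize (Ht ((b - a)/(2*b))).
  assert (0 < (b - a) / (2 * b) <= 1).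
  { split. apply Rdiv_lt_0_compat; lra.
    apply Rmult_le_reg_r with (2*b); [lra|]. field_simplify; lra. }
  specialize (Ht H1).
  replace (mu / 2 * (1 - (b - a) / (2 * b)) * d) with (b * (1 - (b - a) / (2 * b))) in Ht
    by (unfold b; ring).
  replace (b * (1 - (b - a) / (2 * b))) with ((a + b)/2) in Ht by (field; lra).
  lra.
Qed.

Definition mix (lam : R) (mk mC : nat) (phi : choice -> R) : R :=
  lam * (/ INR mk * fsum mk (fun i => phi (true, i)))
  + (1 - lam) * (/ INR mC * fsum mC (fun j => phi (false, j))).

Lemma expect_S lam mk mC t F :
  expect lam mk mC (S t) F = mix lam mk mC (fun c => expect lam mk mC t (fun s => F (c :: s))).
Proof. reflexivity. Qed.

Section Mix.
Variables (lam : R) (mk mC : nat).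
Hypothesis Hlam : 0 <= lam <= 1.
Hypothesis Hk : (0 < mk)%nat.
Hypothesis HC : (0 < mC)%nat.

Lemma mix_le phi psi : (forall c, phi c <= psi c) -> mix lam mk mC phi <= mix lam mk mC psi.
Proof.
  intros Hp. unfold mix.
  assert (0 < INR mk) by (apply lt_0_INR; lia). assert (0 < INR mC) by (apply lt_0_INR; lia).
  apply Rplus_le_compat; apply Rmult_le_compat_l; try lra;
  apply Rmult_le_compat_l; try (left; apply Rinv_0_lt_compat; lra);
  apply fsum_le; intros; apply Hp.
Qed.

Lemma mix_lin a b d phi psi :
  mix lam mk mC (fun c => a + b * phi c + d * psi c)
  = a + b * mix lam mk mC phi + d * mix lam mk mC psi.
Proof.
  assert (0 < INR mk) by (apply lt_0_INR; lia). assert (0 < INR mC) by (apply lt_0_INR; lia).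
  unfold mix.
  assert (E : forall m, fsum m (fun i => a + b * phi (true, i) + d * psi (true, i)) = INR m * a + b * fsum m (fun i => phi (true,i)) + d * fsum m (fun i => psi (true,i))).
  { intros m. rewrite <- fsum_const, !fsum_scal, !fsum_add. apply fsum_ext; intros; ring. }
  assert (E' : forall m, fsum m (fun i => a + b * phi (false, i) + d * psi (false, i)) = INR m * a + b * fsum m (fun i => phi (false,i)) + d * fsum m (fun i => psi (false,i))).
  { intros m. rewrite <- fsum_const, !fsum_scal, !fsum_add. apply fsum_ext; intros; ring. }
  rewrite E, E'. field. lra.
Qed.

Lemma mix_const_add a phi : mix lam mk mC (fun c => a + phi c) = a + mix lam mk mC phi.
Proof.
  rewrite <- (Rmult_1_l (mix lam mk mC phi)), <- (Rplus_0_r (a + 1 * _)), <- (Rmult_0_l (mix lam mk mC phi)).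
  rewrite <- mix_lin. f_equal. apply functional_extensionality; intros; ring.
Qed.

Lemma mix_scal a phi : mix lam mk mC (fun c => a * phi c) = a * mix lam mk mC phi.
Proof.
  transitivity (0 + a * mix lam mk mC phi + 0 * mix lam mk mC phi); [|ring].
  rewrite <- mix_lin. f_equal. apply functional_extensionality; intros; ring.
Qed.

Lemma expect_le T : forall F G, (forall s, length s = T -> F s <= G s) ->
  expect lam mk mC T F <= expect lam mk mC T G.
Proof.
  induction T; intros F G HFG. simpl. apply HFG; reflexivity.
  rewrite !expect_S. apply mix_le. intros c. apply IHT. intros s Hs. apply HFG. simpl; lia.
Qed.

Lemma expect_const_add T : forall a F,
  expect lam mk mC T (fun s => a + F s) = a + expect lam mk mC T F.
Proof.
  induction T; intros a F. reflexivity.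
  rewrite !expect_S. rewrite <- mix_const_add. f_equal. apply functional_extensionality; intros c.
  apply IHT.
Qed.

Lemma expect_scal T : forall a F,
  expect lam mk mC T (fun s => a * F s) = a * expect lam mk mC T F.
Proof.
  induction T; intros a F. reflexivity.
  rewrite !expect_S. rewrite <- mix_scal. f_equal. apply functional_extensionality; intros c.
  apply IHT.
Qed.
End Mix.

Section Jensen.
Variables (H : vec -> Prop) (f : vec -> R).
Hypothesis Hc : convex_in H.
Hypothesis Hf : forall x y t, H x -> H y -> 0 <= t <= 1 ->
  f (vadd (vscale t x) (vscale (1 - t) y)) <= t * f x + (1 - t) * f y.

Definition sumf (l : list vec) := fold_right (fun x acc => f x + acc) 0 l.

Lemma jensen l : l <> nil -> Forall H l ->
  H (vscale (/ INR (length l)) (vsum_list l)) /\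
  f (vscale (/ INR (length l)) (vsum_list l)) <= / INR (length l) * sumf l.
Proof.
  induction l as [|x l IH]; intros Hn Hall. congruence.
  inversion Hall; subst.
  destruct l as [|y l'].
  - replace (vscale (/ INR (length (x :: nil))) (vsum_list (x :: nil))) with x.
    split; auto. simpl. lra.
    apply functional_extensionality; intros i. unfold vscale, vsum_list, vadd. simpl. field.
  - set (l := y :: l') in *.
    destruct (IH ltac:(discriminate) H3) as [HA Hfa].
    set (k := INR (length l)) in *.
    assert (Hk : 0 < k) by (unfold k; apply lt_0_INR; simpl; lia).
    assert (Hlen : INR (length (x :: l)) = k + 1) by (unfold k; simpl length; rewrite S_INR; reflexivity).
    rewrite Hlen.
    set (t := / (k + 1)).
    assert (Ht : 0 <= t <= 1).
    { unfold t; split. left; apply Rinv_0_lt_compat; lra.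
      apply Rmult_le_reg_r with (k+1); [lra|]. rewrite Rinv_l; lra. }
    replace (vscale t (vsum_list (x :: l))) with
      (vadd (vscale t x) (vscale (1 - t) (vscale (/ k) (vsum_list l)))).
    2: { apply functional_extensionality; intros i. unfold vscale, vadd, t. simpl vsum_list.
         unfold vadd. field. lra. }
    split. apply Hc; auto.
    eapply Rle_trans. apply Hf; auto.
    change (sumf (x :: l)) with (f x + sumf l). replace (t * (f x + sumf l)) with (t * f x + (1 - t) * (/ k * sumf l)).
    2: { unfold t. field. lra. }
    apply Rplus_le_compat_l. apply Rmult_le_compat_l; lra.
Qed.
End Jensen.

Section Main.
Variables (n : nat) (H : vec -> Prop) (Z : Type) (loss : vec -> Z -> R) (gr : vec -> Z -> vec)
  (G : R) (mk mC : nat) (zk zC : nat -> Z) (lam : R) (P : vec -> vec) (eta : R) (w : vec).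
Hypothesis Hlam : 0 <= lam < 1.
Hypothesis HmK : (0 < mk)%nat.
Hypothesis HmC : (0 < mC)%nat.
Hypothesis Hsub : subset_Rn n H.
Hypothesis Hconv : convex_in H.
Hypothesis Hproj : is_projection n H P.
Hypothesis Hgr_Rn : forall h z, H h -> in_Rn n (gr h z).
Hypothesis Hgr_sub : forall h z, H h -> is_subgradient_on n H (fun h' => loss h' z) h (gr h z).
Hypothesis Hgr_bd : forall h z, H h -> vnorm n (gr h z) <= G.
Hypothesis Hw : H w.
Hypothesis Heta : 0 <= eta.

Let g := g_obj loss lam mk zk mC zC.
Let step h c := P (vsub h (vscale eta (gr h (sample_of zk zC c)))).
Let traj h s := sgd_traj P gr eta zk zC h s.
Let mx := mix lam mk mC.
Let E := expect lam mk mC.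

Lemma step_H h c : H h -> H (step h c).
Proof.
  intros Hh. apply Hproj. intros i Hi. unfold vsub, vscale.
  rewrite (Hsub h Hh i Hi), (Hgr_Rn h _ Hh i Hi). ring.
Qed.

Lemma traj_H s : forall h, H h -> Forall H (traj h s).
Proof. induction s; intros h Hh; simpl; constructor; auto. apply IHs. apply step_H; auto. Qed.

Lemma traj_len s : forall h, length (traj h s) = length s.
Proof. induction s; intros h; simpl; auto. Qed.

Lemma step_bound h c : H h ->
  nsq n (vsub (step h c) w) <=
  nsq n (vsub h w) + (2 * eta) * dot n (gr h (sample_of zk zC c)) (vsub w h) + eta ^ 2 * G ^ 2.
Proof.
  intros Hh. set (gg := gr h (sample_of zk zC c)).
  eapply Rle_trans. apply (proj_nonexp n H P); auto.
  { intros i Hi. unfold vsub, vscale. unfold gg. rewrite (Hsub h Hh i Hi), (Hgr_Rn h _ Hh i Hi). ring. }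
  fold gg.
  replace (nsq n (vsub (vsub h (vscale eta gg)) w)) with
    (nsq n (vsub h w) + (2 * eta) * dot n gg (vsub w h) + eta^2 * nsq n gg) by fsum_id.
  apply Rplus_le_compat_l. apply Rmult_le_compat_l. apply pow2_ge_0.
  rewrite <- vnorm_sq. pose proof (vnorm_nonneg n gg). pose proof (Hgr_bd h (sample_of zk zC c) Hh).
  fold gg in H1. simpl. nra.
Qed.

Lemma mix_loss h : mx (fun c => loss h (sample_of zk zC c)) = g h.
Proof. reflexivity. Qed.

Lemma subgrad_mix h : H h -> mx (fun c => dot n (gr h (sample_of zk zC c)) (vsub w h)) <= g w - g h.
Proof.
  intros Hh. transitivity (mx (fun c => 0 + 1 * loss w (sample_of zk zC c) + (-1) * loss h (sample_of zk zC c))).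
  - apply mix_le; try lra; auto. intros c. pose proof (Hgr_sub h (sample_of zk zC c) Hh w Hw). simpl in H0. lra.
  - unfold mx. rewrite mix_lin by (auto; lra). fold mx. rewrite !mix_loss. lra.
Qed.

Lemma main T : forall h, H h ->
  2 * eta * (E T (fun s => sumf g (traj h s)) - INR T * g w) <= nsq n (vsub h w) + INR T * (eta ^ 2 * G ^ 2).
Proof.
  induction T; intros h Hh.
  - change (E 0 (fun s => sumf g (traj h s))) with 0. simpl INR. pose proof (nsq_nonneg n (vsub h w)). lra.
  - assert (EE : E (S T) (fun s => sumf g (traj h s)) = g h + mx (fun c => E T (fun s => sumf g (traj (step h c) s)))).
    { unfold E. rewrite expect_S. unfold mx. rewrite <- mix_const_add by (auto; lra). f_equal.
      apply functional_extensionality; intros c. rewrite <- expect_const_add by (auto; lra). reflexivity. }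
    rewrite EE. clear EE.
    set (K := nsq n (vsub h w) + (INR T + 1) * (eta ^ 2 * G ^ 2) + 2 * eta * (INR T * g w)).
    assert (HM : mx (fun c => 2 * eta * E T (fun s => sumf g (traj (step h c) s)))
              <= mx (fun c => K + (2 * eta) * dot n (gr h (sample_of zk zC c)) (vsub w h) + 0 * 0)).
    { apply mix_le; try lra; auto. intros c. pose proof (IHT (step h c) (step_H h c Hh)).
      pose proof (step_bound h c Hh). unfold K. lra. }
    unfold mx in HM. rewrite mix_scal, mix_lin in HM by (auto; lra). fold mx in HM.
    pose proof (subgrad_mix h Hh).
    rewrite S_INR.
    assert (2 * eta * mx (fun c => dot n (gr h (sample_of zk zC c)) (vsub w h)) <= 2 * eta * (g w - g h)).
    { apply Rmult_le_compat_l; lra. }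
    unfold K in HM. lra.
Qed.

Lemma main0 T : eta = 0 -> forall h, H h -> nsq n (vsub h w) = 0 ->
  E T (fun s => sumf g (traj h s)) - INR T * g w <= 0.
Proof.
  intros He. induction T; intros h Hh H0.
  - change (E 0 (fun s => sumf g (traj h s))) with 0. simpl INR. lra.
  - assert (EE : E (S T) (fun s => sumf g (traj h s)) = g h + mx (fun c => E T (fun s => sumf g (traj (step h c) s)))).
    { unfold E. rewrite expect_S. unfold mx. rewrite <- mix_const_add by (auto; lra). f_equal.
      apply functional_extensionality; intros c. rewrite <- expect_const_add by (auto; lra). reflexivity. }
    rewrite EE. clear EE.
    assert (HM : mx (fun c => E T (fun s => sumf g (traj (step h c) s)))
              <= mx (fun c => INR T * g w + 0 * 0 + 0 * 0)).
    { apply mix_le; try lra; auto. intros c. apply Rle_trans with (INR T * g w); [|lra].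
      assert (nsq n (vsub (step h c) w) = 0).
      { pose proof (step_bound h c Hh). rewrite He, H0 in H1. pose proof (nsq_nonneg n (vsub (step h c) w)).
        lra. }
      pose proof (IHT _ (step_H h c Hh) H1). lra. }
    unfold mx in HM. rewrite mix_lin in HM by (auto; lra). fold mx in HM.
    pose proof (subgrad_mix h Hh).
    assert (0 <= mx (fun c => dot n (gr h (sample_of zk zC c)) (vsub w h))).
    { transitivity (mx (fun c => 0 + 0 * 0 + 0 * 0)).
      - unfold mx; rewrite mix_lin by (auto; lra). lra.
      - apply mix_le; try lra; auto. intros c.
        pose proof (cauchy_schwarz n (vscale (-1) (gr h (sample_of zk zC c))) (vsub w h)).
        replace (vnorm n (vsub w h)) with 0 in H2.
        2: { unfold vnorm. replace (dot n (vsub w h) (vsub w h)) with (nsq n (vsub h w)) by fsum_id.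
             rewrite H0. symmetry; apply sqrt_0. }
        replace (dot n (vscale (-1) (gr h (sample_of zk zC c))) (vsub w h))
          with (-1 * dot n (gr h (sample_of zk zC c)) (vsub w h)) in H2 by fsum_id.
        lra. }
    rewrite S_INR. lra.
Qed.
End Main.

Theorem theorem2
  (n : nat) (H : vec -> Prop) (Rd : R)
  (Z : Type) (loss : vec -> Z -> R) (gr : vec -> Z -> vec) (mu G : R)
  (mk mC : nat) (zk zC : nat -> Z) (lam : R)
  (P : vec -> vec) (h_c h_lam : vec) (r eta : R) (T : nat)
  (Hlam : 0 <= lam < 1)
  (HmK : (0 < mk)%nat) (HmC : (0 < mC)%nat)
  (Hsub : subset_Rn n H) (Hconv : convex_in H) (Hclosed : closed_in_Rn n H)
  (Hdiam : diam_le n H Rd)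
  (Hproj : is_projection n H P)
  (Hmu : 0 < mu) (HG : 0 < G)
  (Hsc : forall z, strongly_convex_on n H mu (fun h => loss h z))
  (Hgr_Rn : forall h z, H h -> in_Rn n (gr h z))
  (Hgr_sub : forall h z, H h -> is_subgradient_on n H (fun h' => loss h' z) h (gr h z))
  (Hgr_bd : forall h z, H h -> vnorm n (gr h z) <= G)
  (Hhc : is_argmin_on H (emp_loss loss mC zC) h_c)
  (Hhlam : is_argmin_on H (g_obj loss lam mk zk mC zC) h_lam)
  (Hr : r >= G ^ 2 * (4 * G / mu + 2 * Rd) ^ 2)
  (Heta : eta = / (G * sqrt (r * INR mk)) * Rmin (2 * G * lam / (mu * (1 - lam))) Rd)
  (HT : INR T = r * INR mk) :
  expect lam mk mC T
    (fun s => g_obj loss lam mk zk mC zC (sgd_avg P gr eta zk zC h_c T s))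
  <= g_obj loss lam mk zk mC zC h_lam
     + sqrt (lam ^ 2 / INR mk + (1 - lam) ^ 2 / INR mC).
Proof.
  set (g := g_obj loss lam mk zk mC zC).
  set (LC := emp_loss loss mC zC). set (LD := emp_loss loss mk zk).
  destruct Hhc as [Hc_in Hc_min]. destruct Hhlam as [Hw Hw_min].
  set (w := h_lam) in *.
  assert (Hmk : 0 < INR mk) by (apply lt_0_INR; lia).
  assert (HmC' : 0 < INR mC) by (apply lt_0_INR; lia).
  assert (HRd : 0 <= Rd) by (eapply Rle_trans; [apply vnorm_nonneg | apply (Hdiam h_c h_c); auto]).
  assert (emp_sc : forall m z, (0 < m)%nat -> forall x y t, H x -> H y -> 0 <= t <= 1 ->
      emp_loss loss m z (vadd (vscale t x) (vscale (1 - t) y))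
      <= t * emp_loss loss m z x + (1 - t) * emp_loss loss m z y
         + - (mu / 2 * t * (1 - t) * vnorm n (vsub x y) ^ 2)).
  { intros m z Hm x y t Hx Hy Ht. unfold emp_loss. apply avg_le; auto.
    intros i _. pose proof (Hsc (z i) x y t Hx Hy Ht). simpl in H0. lra. }
  set (d := vnorm n (vsub h_c w)).
  assert (Hd0 : 0 <= d) by apply vnorm_nonneg.
  assert (Hdsym : vnorm n (vsub w h_c) = d).
  { unfold d, vnorm. f_equal. fsum_id. }
  assert (Hq : mu / 2 * (d ^ 2) <= LC w - LC h_c).
  { replace (d ^ 2) with (nsq n (vsub w h_c)) by (rewrite <- Hdsym, vnorm_sq; reflexivity).
    apply (quad_growth n H mu LC h_c w); auto; try lra.
    intros x y t Hx Hy Ht. pose proof (emp_sc mC zC HmC x y t Hx Hy Ht). unfold LC. lra. }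
  assert (HLD : LD h_c <= 1 * LD w + 0 * LD w + G * d).
  { unfold LD, emp_loss. apply avg_le; auto. intros i _.
    pose proof (Hgr_sub h_c (zk i) Hc_in w Hw). simpl in H0.
    pose proof (cauchy_schwarz n (vscale (-1) (gr h_c (zk i))) (vsub w h_c)).
    replace (dot n (vscale (-1) (gr h_c (zk i))) (vsub w h_c))
      with (-1 * dot n (gr h_c (zk i)) (vsub w h_c)) in H1 by fsum_id.
    replace (vnorm n (vscale (-1) (gr h_c (zk i)))) with (vnorm n (gr h_c (zk i))) in H1
      by (unfold vnorm; f_equal; fsum_id).
    rewrite Hdsym in H1. pose proof (Hgr_bd h_c (zk i) Hc_in).
    pose proof (vnorm_nonneg n (gr h_c (zk i))).
    assert (vnorm n (gr h_c (zk i)) * d <= G * d) by (apply Rmult_le_compat_r; auto).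
    lra. }
  assert (Hgw : g w <= g h_c) by (apply Hw_min; auto).
  unfold g, g_obj in Hgw. fold LD LC in Hgw.
  set (D := Rmin (2 * G * lam / (mu * (1 - lam))) Rd) in *.
  assert (HA : 0 <= 2 * G * lam / (mu * (1 - lam))).
  { unfold Rdiv. apply Rmult_le_pos. nra. left; apply Rinv_0_lt_compat; nra. }
  assert (HD0 : 0 <= D) by (apply Rmin_glb; auto).
  assert (HdD : d <= D).
  { apply Rmin_glb; [| apply Hdiam; auto].
    assert (Hk : (1 - lam) * (mu / 2 * d ^ 2) <= lam * (G * d)).
    { assert ((1 - lam) * (mu / 2 * d ^ 2) <= (1 - lam) * (LC w - LC h_c)) by (apply Rmult_le_compat_l; lra).
      assert (lam * (LD h_c - LD w) <= lam * (G * d)) by (apply Rmult_le_compat_l; lra).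
      lra. }
    destruct (Req_dec d 0) as [E0|E0]. rewrite E0; auto.
    assert (0 < d) by lra.
    apply Rmult_le_reg_r with (mu * (1 - lam) * d). { apply Rmult_lt_0_compat; [|lra]. nra. }
    replace (2 * G * lam / (mu * (1 - lam)) * (mu * (1 - lam) * d)) with (2 * (lam * (G * d)))
      by (field; split; lra).
    nra. }
  set (K0 := 4 * G / mu + 2 * Rd).
  assert (HK0 : 0 < K0) by (unfold K0; assert (0 < 4 * G / mu) by (apply Rdiv_lt_0_compat; lra); lra).
  assert (Hrpos : 0 < r) by (assert (0 < G ^ 2 * K0 ^ 2) by (apply Rmult_lt_0_compat; apply pow_lt; lra); fold K0 in Hr; lra).
  assert (HTpos : 0 < INR T) by (rewrite HT; apply Rmult_lt_0_compat; lra).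
  assert (HTnz : T <> 0%nat) by (intro E0; rewrite E0 in HTpos; simpl in HTpos; lra).
  assert (gconv : forall x y t, H x -> H y -> 0 <= t <= 1 ->
      g (vadd (vscale t x) (vscale (1 - t) y)) <= t * g x + (1 - t) * g y).
  { intros x y t Hx Hy Ht. unfold g, g_obj.
    pose proof (emp_sc mk zk HmK x y t Hx Hy Ht). pose proof (emp_sc mC zC HmC x y t Hx Hy Ht).
    assert (0 <= mu / 2 * t * (1 - t) * vnorm n (vsub x y) ^ 2).
    { apply Rmult_le_pos. apply Rmult_le_pos. apply Rmult_le_pos. lra. lra. lra. apply pow2_ge_0. }
    assert (lam * emp_loss loss mk zk (vadd (vscale t x) (vscale (1 - t) y)) <=
            lam * (t * emp_loss loss mk zk x + (1 - t) * emp_loss loss mk zk y))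
      by (apply Rmult_le_compat_l; lra).
    assert ((1 - lam) * emp_loss loss mC zC (vadd (vscale t x) (vscale (1 - t) y)) <=
            (1 - lam) * (t * emp_loss loss mC zC x + (1 - t) * emp_loss loss mC zC y))
      by (apply Rmult_le_compat_l; lra).
    lra. }
  set (X := expect lam mk mC T (fun s => sumf g (sgd_traj P gr eta zk zC h_c s))).
  assert (HJ : expect lam mk mC T (fun s => g (sgd_avg P gr eta zk zC h_c T s)) <= / INR T * X).
  { unfold X. rewrite <- expect_scal by (auto; lra). apply expect_le; auto; try lra.
    intros s Hs. unfold sgd_avg.
    pose proof (traj_len Z gr zk zC P eta s h_c) as HL. rewrite Hs in HL.
    rewrite <- HL. apply (jensen H g Hconv gconv).
    - intro E0. rewrite E0 in HL. simpl in HL. auto.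
    - apply (traj_H n H Z gr zk zC P eta Hsub Hproj Hgr_Rn); auto. }
  assert (Heps0 : 0 <= sqrt (lam ^ 2 / INR mk + (1 - lam) ^ 2 / INR mC)) by apply sqrt_pos.
  set (q := sqrt (r * INR mk)) in *.
  assert (Hq2 : q * q = INR T) by (unfold q; rewrite sqrt_sqrt; lra).
  assert (Hqpos : 0 < q) by (unfold q; apply sqrt_lt_R0; nra).
  assert (Heta0 : 0 <= eta) by (rewrite Heta; apply Rmult_le_pos; auto; left; apply Rinv_0_lt_compat; nra).
  destruct (Req_dec eta 0) as [He|He].
  - assert (HD : D = 0).
    { rewrite Heta in He. apply Rmult_integral in He. destruct He as [He|He]; auto.
      exfalso. apply Rinv_neq_0_compat in He; auto. nra. }
    assert (Hnsq : nsq n (vsub h_c w) = 0).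
    { rewrite <- vnorm_sq. fold d. assert (d = 0) by lra. rewrite H0; ring. }
    pose proof (main0 n H Z loss gr G mk mC zk zC lam P eta w Hlam HmK HmC Hsub Hconv Hproj Hgr_Rn Hgr_sub Hgr_bd Hw T He h_c Hc_in Hnsq).
    cbv beta in H0; fold g X in H0.
    apply Rle_trans with (/ INR T * X); auto.
    apply Rmult_le_reg_l with (INR T); auto.
    replace (INR T * (/ INR T * X)) with X by (field; lra).
    assert (0 <= INR T * sqrt (lam ^ 2 / INR mk + (1 - lam) ^ 2 / INR mC)) by (apply Rmult_le_pos; lra).
    rewrite Rmult_plus_distr_l. lra.
  - assert (Hepos : 0 < eta) by lra.
    pose proof (main n H Z loss gr G mk mC zk zC lam P eta w Hlam HmK HmC Hsub Hconv Hproj Hgr_Rn Hgr_sub Hgr_bd Hw Heta0 T h_c Hc_in) as HM.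
    cbv beta in HM; fold g X in HM.
    assert (Hnsq : nsq n (vsub h_c w) <= D ^ 2).
    { rewrite <- vnorm_sq. fold d. apply pow_incr; lra. }
    assert (HDpos : 0 < D).
    { destruct HD0 as [|HD0]; auto. rewrite <- HD0 in Heta. rewrite Rmult_0_r in Heta. lra. }
    assert (Heta' : eta = D / (G * q)) by (rewrite Heta; unfold Rdiv; ring).
    assert (HX : X - INR T * g w <= D * G * q).
    { apply Rmult_le_reg_l with (2 * eta); [lra|].
      eapply Rle_trans. apply HM.
      replace (2 * eta * (D * G * q)) with (2 * D ^ 2) by (rewrite Heta'; field; lra).
      replace (INR T * (eta ^ 2 * G ^ 2)) with (D ^ 2) by (rewrite <- Hq2, Heta'; field; lra).
      lra. }
    assert (HDK : D <= lam * K0).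
    { unfold K0. destruct (Rle_or_lt (1/2) lam) as [hl|hl].
      - apply Rle_trans with Rd. apply Rmin_r.
        assert (0 <= lam * (4 * G / mu)) by (apply Rmult_le_pos; [lra| left; apply Rdiv_lt_0_compat; lra]).
        nra.
      - apply Rle_trans with (2 * G * lam / (mu * (1 - lam))). apply Rmin_l.
        apply Rmult_le_reg_r with (mu * (1 - lam)). nra.
        replace (2 * G * lam / (mu * (1 - lam)) * (mu * (1 - lam))) with (2 * G * lam) by (field; lra).
        replace (lam * (4 * G / mu + 2 * Rd) * (mu * (1 - lam))) with (lam * (1 - lam) * 4 * G + 2 * Rd * lam * mu * (1 - lam)) by (field; lra).
        assert (0 <= 2 * Rd * lam * mu * (1 - lam)).
        { repeat apply Rmult_le_pos; lra. }
        assert (0 <= G * lam * (1 - 2 * lam)) by (apply Rmult_le_pos; [apply Rmult_le_pos|]; lra).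
        assert (lam * (1 - lam) * 4 * G - 2 * G * lam = 2 * (G * lam * (1 - 2 * lam))) by ring.
        lra. }
    assert (Hfin : D * G / q <= sqrt (lam ^ 2 / INR mk + (1 - lam) ^ 2 / INR mC)).
    { rewrite <- (sqrt_pow2 (D * G / q)).
      2: { apply Rmult_le_pos. nra. left; apply Rinv_0_lt_compat; lra. }
      apply sqrt_le_1_alt.
      assert (0 <= (1 - lam) ^ 2 / INR mC) by (apply Rmult_le_pos; [apply pow2_ge_0| left; apply Rinv_0_lt_compat; lra]).
      enough ((D * G / q) ^ 2 <= lam ^ 2 / INR mk) by lra.
      replace ((D * G / q) ^ 2) with (D ^ 2 * G ^ 2 / (r * INR mk)).
      2: { rewrite <- HT, <- Hq2. field. lra. }
      apply Rmult_le_reg_r with (r * INR mk). nra.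
      replace (D ^ 2 * G ^ 2 / (r * INR mk) * (r * INR mk)) with (D ^ 2 * G ^ 2) by (field; nra).
      replace (lam ^ 2 / INR mk * (r * INR mk)) with (lam ^ 2 * r) by (field; lra).
      fold K0 in Hr.
      assert (D ^ 2 <= lam ^ 2 * K0 ^ 2) by (rewrite <- Rpow_mult_distr; apply pow_incr; lra).
      assert (D ^ 2 * G ^ 2 <= lam ^ 2 * K0 ^ 2 * G ^ 2) by (apply Rmult_le_compat_r; [apply pow2_ge_0| lra]).
      assert (lam ^ 2 * (G ^ 2 * K0 ^ 2) <= lam ^ 2 * r) by (apply Rmult_le_compat_l; [apply pow2_ge_0| lra]).
      nra. }
    apply Rle_trans with (/ INR T * X); auto.
    replace (/ INR T * X) with (g w + (X - INR T * g w) / INR T) by (field; lra).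
    apply Rplus_le_compat_l.
    apply Rle_trans with (D * G * q / INR T).
    { unfold Rdiv. apply Rmult_le_compat_r; auto. left; apply Rinv_0_lt_compat; lra. }
    replace (D * G * q / INR T) with (D * G / q) by (rewrite <- Hq2; field; lra). auto.
Qed.
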